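(* Let $S$ be a topological semigroup with an open right unit $e$. For every open neighborhood $U\subset S$ of $e$ there is a premetric $d:S\times S\to[0,1]$ such that: (1) $\overline d=\overline d^\circ\le d$; (2) $d$ is a left-subinvariant $\overline{\mathsf{dist}}$-continuous quasi-pseudometric with open balls on $S$; (3) $\overline d=\overline d^\circ$ is a left-subinvariant right-continuous $\overline{\mathsf{dist}}$-continuous quasi-pseudometric on $S$; (4) $B_d(x,1)\subset xU$ and $B_{\overline d}(x,1)\subset\mathrm{int}\,\overline{xU}$ for every $x\in S$; (5) if $e$ is a balanced point of $S$, then the quasi-pseudometrics $d$ and $\overline d=\overline d^\circ$ are subinvariant.
   Context: A topological semigroup is a topological space with a continuous associative multiplication. $e$ is a right unit if $xe=x$ for all $x$; an open right unit if moreover $xV$ is a neighborhood of $x$ for every neighborhood $V$ of $e$ and every $x\in S$. A point $e$ is balanced if it has a neighborhood base of open sets $V$ with $xV=Vx$ for all $x\in S$. A premetric is $d:S\times S\to[0,\infty)$ with $d(x,x)=0$; a quasi-pseudometric also satisfies $d(x,z)\le d(x,y)+d(y,z)$. $d$ is left-subinvariant if $d(zx,zy)\le d(x,y)$, right-subinvariant if $d(xz,yz)\le d(x,y)$, subinvariant if both, for all $x,y,z$. $B_d(x,\varepsilon)=\{y:d(x,y)<\varepsilon\}$, $B_d(A,\varepsilon)=\bigcup_{a\in A}B_d(a,\varepsilon)$. $d$ has open balls if all $B_d(x,\varepsilon)$ are open; right-continuous if $y\mapsto d(x,y)$ is continuous for each $x$. For non-empty $A$: $\overline d_A(x)=\inf\{\varepsilon>0:x\in\overline{B_d(A,\varepsilon)}\}$,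 $\overline d^\circ_A(x)=\inf\{\varepsilon>0:x\in B_d(A,\varepsilon)\cup\mathrm{int}\,\overline{B_d(A,\varepsilon)}\}$; $d$ is $\overline{\mathsf{dist}}$-continuous if all $\overline d_A$ are continuous. Regularization $\overline d(x,y)=\overline d_{\{x\}}(y)$, semiregularization $\overline d^\circ(x,y)=\overline d^\circ_{\{x\}}(y)$. *)

(* Defs.v *)
From HB Require Import structures.
From mathcomp Require Import all_boot all_order all_algebra.
From mathcomp Require Import all_classical all_reals all_analysis.
Set Implicit Arguments. Unset Strict Implicit. Unset Printing Implicit Defensive.
Import Order.TTheory GRing.Theory Num.Theory.
Import numFieldNormedType.Exports.
Local Open Scope classical_set_scope.
Local Open Scope ring_scope.

Section Defs.
Context {R : realType} {S : topologicalType}.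

Definition topological_semigroup (mul : S -> S -> S) : Prop :=
  (forall x y z, mul x (mul y z) = mul (mul x y) z) /\
  continuous (fun p : S * S => mul p.1 p.2).

Definition lmul (mul : S -> S -> S) (x : S) (A : set S) : set S := mul x @` A.
Definition rmul (mul : S -> S -> S) (A : set S) (x : S) : set S :=
  (fun a => mul a x) @` A.

Definition right_unit (mul : S -> S -> S) (e : S) : Prop :=
  forall x, mul x e = x.

Definition open_right_unit (mul : S -> S -> S) (e : S) : Prop :=
  right_unit mul e /\
  forall (V : set S) (x : S), nbhs e V -> nbhs x (lmul mul x V).

Definition balanced_point (mul : S -> S -> S) (e : S) : Prop :=
  forall W : set S, nbhs e W ->
    exists V : set S, [/\ open V, V e, V `<=` W &
                          forall x, lmul mul x V = rmul mul V x].

Definition premetric (d : S -> S -> R) : Prop :=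
  (forall x y, 0 <= d x y) /\ (forall x, d x x = 0).

Definition quasi_pseudometric (d : S -> S -> R) : Prop :=
  premetric d /\ (forall x y z, d x z <= d x y + d y z).

Definition left_subinvariant (mul : S -> S -> S) (d : S -> S -> R) : Prop :=
  forall x y z, d (mul z x) (mul z y) <= d x y.
Definition right_subinvariant (mul : S -> S -> S) (d : S -> S -> R) : Prop :=
  forall x y z, d (mul x z) (mul y z) <= d x y.
Definition subinvariant (mul : S -> S -> S) (d : S -> S -> R) : Prop :=
  left_subinvariant mul d /\ right_subinvariant mul d.

Definition dball (d : S -> S -> R) (x : S) (eps : R) : set S :=
  [set y | d x y < eps].
Definition dballA (d : S -> S -> R) (A : set S) (eps : R) : set S :=
  \bigcup_(a in A) dball d a eps.

Definition has_open_balls (d : S -> S -> R) : Prop :=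
  forall x eps, open (dball d x eps).

Definition pm_right_continuous (d : S -> S -> R) : Prop :=
  forall x, continuous (d x).

Definition dbar (d : S -> S -> R) (A : set S) (x : S) : R :=
  inf [set eps : R | 0 < eps /\ closure (dballA d A eps) x].

Definition dbarO (d : S -> S -> R) (A : set S) (x : S) : R :=
  inf [set eps : R | 0 < eps /\
        (dballA d A eps `|` interior (closure (dballA d A eps))) x].

Definition dist_continuous (d : S -> S -> R) : Prop :=
  forall A : set S, A !=set0 -> continuous (dbar d A).

Definition dreg (d : S -> S -> R) : S -> S -> R := fun x y => dbar d [set x] y.
Definition dsemireg (d : S -> S -> R) : S -> S -> R := fun x y => dbarO d [set x] y.

End Defs.

(* Main.v *)
Require Import Defs.
From HB Require Import structures.
From mathcomp Require Import all_boot all_order all_algebra.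
From mathcomp Require Import all_classical all_reals all_analysis.
From mathcomp Require Import ring lra.
Import Order.TTheory GRing.Theory Num.Theory.
Import numFieldNormedType.Exports.
Local Open Scope classical_set_scope.
Local Open Scope ring_scope.
Set Implicit Arguments. Unset Strict Implicit. Unset Printing Implicit Defensive.


Section Generic.
Context {R : realType} {S : topologicalType}.
Variable d : S -> S -> R.
Hypothesis hd0 : forall x y, 0 <= d x y.
Hypothesis hdxx : forall x, d x x = 0.
Hypothesis hd1 : forall x y, d x y <= 1.
Hypothesis htri : forall x y z, d x z <= d x y + d y z.
Hypothesis hN : forall x (δ : R), 0 < δ -> nbhs x (dball d x δ).
Hypothesis hR : forall y w (eps : R), d y w < eps -> forall N, nbhs w N ->
  exists K, nbhs y K /\ forall z, K z -> exists z', N z' /\ d z z' < eps.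

Local Notation C A e := (closure (dballA d A e)).

Lemma dballA_mono A (e1 e2 : R) : e1 <= e2 -> dballA d A e1 `<=` dballA d A e2.
Proof. by move=> le y [a Aa h]; exists a => //; rewrite /dball/=; exact: lt_le_trans h le. Qed.

Lemma C_mono A (e1 e2 : R) : e1 <= e2 -> C A e1 `<=` C A e2.
Proof. by move=> le; apply: closureS; apply: dballA_mono. Qed.

Lemma dballA_T A (e : R) x : A !=set0 -> 1 < e -> dballA d A e x.
Proof. by move=> [a Aa] le; exists a => //; rewrite /dball/=; exact: le_lt_trans (hd1 _ _) le. Qed.

Lemma Eb_ne A x : A !=set0 -> [set eps : R | 0 < eps /\ C A eps x] !=set0.
Proof.
move=> An; exists 2; split => //; apply: subset_closure; apply: dballA_T => //.
by rewrite ltr1n.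
Qed.

Lemma Eb_lb A x : has_lbound [set eps : R | 0 < eps /\ C A eps x].
Proof. by exists 0 => y [/ltW]. Qed.

Lemma dbar_ge0 A x : A !=set0 -> 0 <= dbar d A x.
Proof. by move=> An; apply: lb_le_inf; [exact: Eb_ne|move=> y [/ltW]]. Qed.

Lemma dbar_lt A x (e : R) : A !=set0 -> dbar d A x < e -> C A e x.
Proof.
move=> An /(inf_lt (@Eb_ne A x An)) [y [y0 Cy] ye].
exact: C_mono (ltW ye) _ Cy.
Qed.

Lemma dbar_le A x (e : R) : 0 < e -> C A e x -> dbar d A x <= e.
Proof. by move=> e0 Ce; apply: ge_inf; [exact: Eb_lb|]. Qed.

Lemma Lp A (e1 e2 : R) y w : C A e1 y -> d y w < e2 -> C A (e1 + e2) w.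
Proof.
move=> Cy dyw N Nw.
have [K [Ky HK]] := @hR y w e2 dyw N Nw.
have [z [[a Aa daz] Kz]] := Cy K Ky.
have [z' [Nz' dzz']] := HK z Kz.
exists z'; split => //; exists a => //; rewrite /dball/=.
apply: le_lt_trans (htri a z z') _.
by apply: ltrD.
Qed.

Lemma Lnb A (e δ : R) x : C A e x -> 0 < δ -> nbhs x (C A (e + δ)).
Proof.
move=> Cx δ0; apply: (filterS _ (@hN x δ δ0)) => w dxw.
exact: Lp Cx dxw.
Qed.

Lemma dbar_cont A : A !=set0 -> continuous (dbar d A).
Proof.
move=> An x; apply/cvgrPdist_lt => eta eta0.
have N1 : nbhs x (C A (dbar d A x + eta / 2 + eta / 4)).
  apply: Lnb; last by lra.
  by apply: dbar_lt => //; lra.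
have N2 : nbhs x [set t | dbar d A x - eta < dbar d A t].
  have [le0|gt0] := leP (dbar d A x - eta / 2) 0.
    apply: nearW => t /=; have := dbar_ge0 t An; lra.
  have nC : ~ C A (dbar d A x - eta / 2) x.
    move=> /(dbar_le gt0); 
    by lra.
  move/existsNP: nC => [B /not_implyP [nB nAB]].
  apply: (filterS _ (nbhs_interior nB)) => t nBt /=.
  apply: lt_le_trans (_ : dbar d A x - eta / 2 <= dbar d A t).
    by lra.
  apply: lb_le_inf; first exact: (@Eb_ne A t An).
  move=> e' [e'0 Ce']; rewrite leNgt; apply/negP => lte.
  have := C_mono (ltW lte) Ce' nBt.
  by move=> /nAB.
apply: (filterS _ (filterI N1 N2)) => t [C1 C2] /=.
rewrite ltr_distlC; apply/andP; split => //.
have D0 := dbar_ge0 x An.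
apply: le_lt_trans (dbar_le _ C1) _; lra.
Qed.


Lemma closure_closure (B : set S) : closure (closure B) = closure B.
Proof. by rewrite -(closure_id (closure B)).1 //; exact: closed_closure. Qed.

Lemma dballA1 x (e : R) y : dballA d [set x] e y <-> d x y < e.
Proof.
split; first by move=> [a /= -> h].
by move=> h; exists x.
Qed.

Lemma set1_ne (x : S) : [set x] !=set0.
Proof. by exists x. Qed.

Lemma dreg_le_d x y : dreg d x y <= d x y.
Proof.
apply/ler_addgt0Pr => eps eps0; rewrite /dreg.
apply: dbar_le; first by have := hd0 x y; lra.
apply: subset_closure; apply/dballA1; lra.
Qed.

Lemma dbar_eq_dbarO A x : A !=set0 -> dbar d A x = dbarO d A x.
Proof.
move=> An.
have EoN : [set eps : R | 0 < eps /\
        (dballA d A eps `|` interior (closure (dballA d A eps))) x] !=set0.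
  by exists 2; split => //; left; apply: dballA_T => //; rewrite ltr1n.
apply: le_anti; apply/andP; split.
  apply: lb_le_inf => // e [e0 [h|h]].
    by apply: dbar_le => //; apply: subset_closure.
  by apply: dbar_le => //; apply: nbhs_singleton.
apply/ler_addgt0Pr => eta eta0.
have H0 := dbar_ge0 x An.
have C1 : C A (dbar d A x + eta / 2) x by apply: dbar_lt => //; lra.
have N := Lnb C1 (_ : 0 < eta / 2).
have -> : dbar d A x + eta = dbar d A x + eta / 2 + eta / 2 by field.
apply: ge_inf; first by exists 0 => y [/ltW].
split; first lra.
by right; apply: N; lra.
Qed.

Lemma dbar_sub A x A' x' : A !=set0 ->
  (forall e, 0 < e -> C A e x -> C A' e x') -> dbar d A' x' <= dbar d A x.
Proof.
move=> An H; apply: lb_le_inf; first exact: (@Eb_ne A x An).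
move=> e [e0 Ce]; apply: ge_inf; first by exists 0 => y [/ltW].
by split => //; apply: H.
Qed.

Lemma closure_map (f : S -> S) (B B' : set S) y :
  {for y, continuous f} -> (forall b, B b -> B' (f b)) ->
  closure B y -> closure B' (f y).
Proof.
move=> fc BB' cB N Nf.
have := fc N Nf => /= /cB [b [Bb Nb]].
by exists (f b); split => //; apply: BB'.
Qed.

Lemma dreg_qpm : quasi_pseudometric (dreg d).
Proof.
split; first split.
- by move=> x y; apply: dbar_ge0; apply: set1_ne.
- move=> x; apply: le_anti; apply/andP; split; last first.
    by apply: dbar_ge0; apply: set1_ne.
  apply/ler_addgt0Pr => eps eps0; rewrite add0r; apply: dbar_le => //.
  by apply: subset_closure; apply/dballA1; rewrite hdxx.
move=> x y z; apply/ler_addgt0Pr => eta eta0.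
have Hxy : C [set x] (dreg d x y + eta / 2) y by apply: dbar_lt; [exact: set1_ne|lra].
have Hyz : C [set y] (dreg d y z + eta / 2) z by apply: dbar_lt; [exact: set1_ne|lra].
have H0 : 0 <= dreg d x y by apply: dbar_ge0; apply: set1_ne.
have H1 : 0 <= dreg d y z by apply: dbar_ge0; apply: set1_ne.
have -> : dreg d x y + dreg d y z + eta =
   (dreg d x y + eta / 2) + (dreg d y z + eta / 2) by field.
apply: dbar_le; first lra.
rewrite -closure_closure.
apply: closureS Hyz => w /dballA1 yw.
exact: Lp Hxy yw.
Qed.

Lemma C_dreg A e : A !=set0 -> closure (dballA (dreg d) A e) = C A e.
Proof.
move=> An; apply/seteqP; split.
  rewrite -[X in _ `<=` X]closure_closure; apply: closureS.
  move=> y [a Aa /= h].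
  have := dbar_lt (set1_ne a) h.
  by apply: closureS => w /dballA1 aw; exists a.
apply: closureS => y [a Aa /= h]; exists a => //.
by rewrite /dball /=; apply: le_lt_trans (dreg_le_d a y) h.
Qed.

Lemma dbar_dreg A : A !=set0 -> dbar (dreg d) A = dbar d A.
Proof.
move=> An; apply/funext => x; rewrite /dbar; congr inf.
by apply/funext => e /=; rewrite C_dreg.
Qed.

Lemma d_open_balls : has_open_balls d.
Proof.
move=> x eps; rewrite openE => y dxy; rewrite /dball /= in dxy.
apply: (filterS _ (@hN y (eps - d x y) _)); last by lra.
move=> w /= yw; rewrite /dball /=.
have := htri x y w; rewrite /dball /= in yw; lra.
Qed.

Lemma dreg_ball (B : set S) x : dball d x 1 `<=` B ->
  dball (dreg d) x 1 `<=` interior (closure B).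
Proof.
move=> dB y h; rewrite /dball /= in h.
have H0 : 0 <= dreg d x y by apply: dbar_ge0; apply: set1_ne.
have C1 : C [set x] ((dreg d x y + 1) / 2) y.
  by apply: dbar_lt; [exact: set1_ne|lra].
have := Lnb C1 (_ : 0 < (1 - (dreg d x y + 1) / 2) / 2).
move=> /(_ ltac:(lra)) N.
rewrite /interior; apply: (filterS _ N); apply: closureS.
move=> w /dballA1 xw; apply: dB; rewrite /dball /=; lra.
Qed.

Lemma generic_all :
  ((forall x y, dreg d x y = dsemireg d x y) /\
      (forall x y, dreg d x y <= d x y) /\
      dist_continuous d /\ has_open_balls d /\
      quasi_pseudometric (dreg d) /\
      pm_right_continuous (dreg d) /\
      dist_continuous (dreg d) /\
      (forall x B, dball d x 1 `<=` B -> dball (dreg d) x 1 `<=` interior (closure B))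
    /\ (forall x y x' y', (forall e, 0 < e -> C [set x] e y -> C [set x'] e y') ->
         dreg d x' y' <= dreg d x y)).
Proof.
split; first by move=> x y; apply: dbar_eq_dbarO; apply: set1_ne.
split; first exact: dreg_le_d.
split; first by move=> A An; apply: dbar_cont.
split; first exact: d_open_balls.
split; first exact: dreg_qpm.
split; first by move=> x; apply: dbar_cont; apply: set1_ne.
split; first by move=> A An; rewrite /dist_continuous dbar_dreg //; apply: dbar_cont.
split; first by move=> x B; apply: dreg_ball.
by move=> x y x' y' H; apply: dbar_sub => //; apply: set1_ne.
Qed.

End Generic.


Section Weights.
Context {R : realType}.
Definition w (n : nat) : R := (2^-1) ^+ n.
Fixpoint sig (s : seq nat) : R := if s is n :: t then w n + sig t else 0.

Lemma w_gt0 n : 0 < w n.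
Proof. by rewrite /w exprn_gt0 // invr_gt0. Qed.

Lemma wS n : w n = 2 * w n.+1.
Proof. rewrite /w exprS mulrA mulfV ?mul1r //. Qed.

Lemma w_lt n m : (n < m)%N -> w m < w n.
Proof.
elim: m => // m IH; rewrite ltnS leq_eqVlt => /orP [/eqP ->|/IH h].
  by rewrite (wS m); have := w_gt0 m.+1; lra.
by rewrite (wS m) in h *; have := w_gt0 m.+1; lra.
Qed.

Lemma w_le n m : (n <= m)%N -> w m <= w n.
Proof. by rewrite leq_eqVlt => /orP [/eqP ->//|/w_lt/ltW]. Qed.

Lemma w_leW n m : w n <= w m -> (m <= n)%N.
Proof. by move=> h; rewrite leqNgt; apply/negP => /w_lt; rewrite ltNge h. Qed.

Lemma sig_ge0 s : 0 <= sig s.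
Proof. by elim: s => //= n t IH; have := w_gt0 n; lra. Qed.

Lemma sig_cat s t : sig (s ++ t) = sig s + sig t.
Proof. by elim: s => /= [|n s ->]; [rewrite add0r|rewrite addrA]. Qed.

Lemma sig_eq0 s : sig s <= 0 -> s = [::].
Proof. by case: s => //= n t; move=> h; exfalso; have := w_gt0 n; have := sig_ge0 t; lra. Qed.

Lemma sig_split s (c : R) : 0 <= c -> c < sig s ->
  exists p n q, s = p ++ n :: q /\ sig p <= c < sig p + w n.
Proof.
elim: s c => /= [c c0|a t IH c c0]; first lra.
have [lt|ge] := ltP c (w a).
  by move=> _; exists [::], a, t; split => //=; apply/andP; split; lra.
move=> h; have [p [n [q [-> /andP [h1 h2]]]]] := IH (c - w a) ltac:(lra) ltac:(lra).
exists (a :: p), n, q; split => //=; apply/andP; split; lra.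
Qed.

Lemma w_small (δ : R) : 0 < δ -> exists n, w n < δ.
Proof.
move=> δ0; exists (Num.truncn (δ^-1)).+1.
set k := (Num.truncn (δ^-1)).+1.
have h1 : δ^-1 < k%:R by apply: truncnS_gt.
have h2 : (k < 2 ^ k)%N by apply: ltn_expl.
have h3 : k%:R < (2 ^ k)%:R :> R by rewrite ltr_nat.
rewrite /w exprVn natrX in h3 *.
have hX : 0 < (2:R) ^+ k by rewrite exprn_gt0.
have hd : 0 < δ^-1 by rewrite invr_gt0.
rewrite -[δ]invrK (ltf_pV2 (hX : (2:R)^+k \in Num.pos) (hd : δ^-1 \in Num.pos)).
lra.
Qed.
End Weights.

Section Chains.
Context {S : topologicalType}.
Variable mul : S -> S -> S.
Variable e : S.
Hypothesis hassoc : forall x y z, mul x (mul y z) = mul (mul x y) z.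
Hypothesis hcont : continuous (fun p : S * S => mul p.1 p.2).
Hypothesis hunit : forall x, mul x e = x.

Lemma rmul_cont x a : {for x, continuous (fun z => mul z a)}.
Proof.
move=> N /= hN.
have := @hcont (x, a) N hN => -[[P1 P2] /= [nP1 nP2] sub].
apply: (filterS _ nP1) => z P1z; apply: (sub (z, a)); split => //=.
exact: nbhs_singleton.
Qed.

Lemma lmul_cont z y : {for y, continuous (mul z)}.
Proof.
move=> N /= hN.
have := @hcont (z, y) N hN => -[[P1 P2] /= [nP1 nP2] sub].
apply: (filterS _ nP2) => t P2t; apply: (sub (z, t)); split => //=.
exact: nbhs_singleton.
Qed.

Variable V : nat -> set S.

Fixpoint P (s : seq nat) (x y : S) : Prop :=
  if s is n :: t then exists a, V n a /\ P t (mul x a) y else y = x.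

Lemma P_cat s1 s2 x z : P (s1 ++ s2) x z <-> exists y, P s1 x y /\ P s2 y z.
Proof.
elim: s1 x => /= [|n t IH] x.
  by split => [h|[y [-> h]]]; [exists x|].
split.
  by move=> [a [Va /IH [y [h1 h2]]]]; exists y; split => //; exists a.
by move=> [y [[a [Va h1]] h2]]; exists a; split => //; apply/IH; exists y.
Qed.

Lemma P_left s x y z : P s x y -> P s (mul z x) (mul z y).
Proof.
elim: s x => /= [x ->//|n t IH x [a [Va h]]].
by exists a; split => //; rewrite -hassoc; apply: IH.
Qed.

Lemma P_right s x y z :
  (forall n a, V n a -> exists a', V n a' /\ mul a z = mul z a') ->
  P s x y -> P s (mul x z) (mul y z).
Proof.
move=> comm; elim: s x => /= [x ->//|n t IH x [a [Va h]]].
have [a' [Va' eq]] := comm n a Va.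
exists a'; split => //; rewrite -hassoc -eq hassoc; exact: IH.
Qed.

Lemma P_cont s y w : P s y w -> exists f : S -> S,
  [/\ f y = w, forall z, P s z (f z) &
      forall N, nbhs w N -> nbhs y (f @^-1` N)].
Proof.
elim: s y => /= [y ->|n t IH y [a [Va h]]].
  by exists id; split => // z.
have [f [fy Pf fc]] := IH _ h.
exists (fun z => f (mul z a)); split => //.
  by move=> z; exists a; split.
by move=> N hN; exact: (@rmul_cont y a _ (fc N hN)).
Qed.

Hypothesis hVe : forall n, nbhs e (V n).
Hypothesis hV3 : forall n a b c, V n.+1 a -> V n.+1 b -> V n.+1 c ->
  V n (mul a (mul b c)).

Lemma V_e n : V n e.
Proof. exact: nbhs_singleton. Qed.

Lemma V_S n : V n.+1 `<=` V n.
Proof. by move=> a Va; have := hV3 Va (V_e _) (V_e _); rewrite !hunit. Qed.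

Lemma V_le n m : (n <= m)%N -> V m `<=` V n.
Proof.
elim: m => [|m IH]; first by rewrite leqn0 => /eqP ->.
rewrite leq_eqVlt => /orP [/eqP ->//|]; rewrite ltnS => /IH h a Va.
exact/h/V_S.
Qed.

Lemma frink_base m x y : P [::] x y -> exists u, V m u /\ y = mul x u.
Proof. by move=> /= ->; exists e; split; [exact: V_e|rewrite hunit]. Qed.

Lemma frink {R : realType} k : forall s, (size s <= k)%N -> forall m x y,
  sig s <= @w R m -> P s x y -> exists u, V m u /\ y = mul x u.
Proof.
elim: k => [|k IH] s.
  by rewrite leqn0 => /nilP -> m x y _; apply: frink_base.
case: s => [|a t] hs m x y hsig hP; first exact: frink_base.
have hwm := @wS R m.
have hw1 := @w_gt0 R m.+1.
have [le1|gt1] := leP (sig (a :: t)) (@w R m.+1).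
  move: hP => /= [v [Va hP]].
  have st := @sig_ge0 R t; have wa := @w_gt0 R a.
  have [u' [Vu' ->]] := IH t hs m.+1 _ _ ltac:(simpl in le1; lra) hP.
  have am : (m.+1 <= a)%N by apply: w_leW; simpl in le1; lra.
  exists (mul v u'); split; last by rewrite hassoc.
  by have := hV3 (V_le am Va) Vu' (V_e _); rewrite hunit.
have [p [n [q [eqs /andP [h1 h2]]]]] := sig_split (ltW hw1) gt1.
rewrite eqs in hP hs hsig; rewrite sig_cat /= in hsig.
move/P_cat: hP => [y1 [hp [v [Vv hq]]]].
rewrite size_cat /= addnS ltnS in hs.
have hsp : (size p <= k)%N by apply: leq_trans hs; apply: leq_addr.
have hsq : (size q <= k)%N by apply: leq_trans hs; apply: leq_addl.
have sp := @sig_ge0 R p; have sq := @sig_ge0 R q; have wn := @w_gt0 R n.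
have [nm|nm] := leqP m.+1 n.
  have [u1 [Vu1 y1E]] := IH p hsp m.+1 _ _ h1 hp; subst y1.
  have [u3 [Vu3 ->]] := IH q hsq m.+1 _ _ ltac:(lra) hq.
  exists (mul u1 (mul v u3)); split; first exact: hV3 Vu1 (V_le nm Vv) Vu3.
  by rewrite !hassoc.
have nm' : n = m.
  apply/eqP; rewrite eqn_leq -ltnS nm /=; apply: w_leW; lra.
subst n.
have p0 : p = [::] by apply: sig_eq0; lra.
have q0 : q = [::] by apply: sig_eq0; lra.
subst p q; move: hp hq => /= <- ->.
by exists v; split.
Qed.

Variable R : realType.
Hypothesis hopen : forall (W : set S) (x : S), nbhs e W -> nbhs x (lmul mul x W).

Definition Q (r : R) x y := exists s, sig s < r /\ P s x y.
Definition G (r : R) x y := 1 < r \/ Q r x y.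
Definition dd x y : R := inf [set r | 0 < r /\ G r x y].

Lemma G_mono (r r' : R) x y : r <= r' -> G r x y -> G r' x y.
Proof.
move=> le [h|[s [hs hP]]]; first by left; lra.
by right; exists s; split => //; lra.
Qed.

Lemma G_ne x y : [set r : R | 0 < r /\ G r x y] !=set0.
Proof. by exists 2; split => //; left; rewrite ltr1n. Qed.

Lemma dd_lt x y (r : R) : dd x y < r -> G r x y.
Proof.
move=> /(inf_lt (G_ne x y)) [r' [r'0 Gr'] lt].
exact: G_mono (ltW lt) Gr'.
Qed.

Lemma dd_le x y (r : R) : 0 < r -> G r x y -> dd x y <= r.
Proof. by move=> r0 Gr; apply: ge_inf; [exists 0 => z [/ltW]|]. Qed.

Lemma dd_ge0 x y : 0 <= dd x y.
Proof. by apply: lb_le_inf; [exact: G_ne|move=> z [/ltW]]. Qed.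

Lemma dd_le1 x y : dd x y <= 1.
Proof.
apply/ler_addgt0Pr => eta eta0; apply: dd_le; first lra.
by left; lra.
Qed.

Lemma dd_xx x : dd x x = 0.
Proof.
apply: le_anti; rewrite dd_ge0 andbT.
apply/ler_addgt0Pr => eta eta0; rewrite add0r; apply: dd_le => //.
by right; exists [::]; split.
Qed.

Lemma dd_tri x y z : dd x z <= dd x y + dd y z.
Proof.
apply/ler_addgt0Pr => eta eta0.
have h1 := dd_ge0 x y; have h2 := dd_ge0 y z.
have G1 : G (dd x y + eta / 2) x y by apply: dd_lt; lra.
have G2 : G (dd y z + eta / 2) y z by apply: dd_lt; lra.
apply: dd_le; first lra.
case: G1 => [g1|[s1 [hs1 hP1]]]; first by left; lra.
case: G2 => [g2|[s2 [hs2 hP2]]]; first by left; lra.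
right; exists (s1 ++ s2); split; first by rewrite sig_cat; lra.
by apply/P_cat; exists y.
Qed.

Lemma dd_left x y z : dd (mul z x) (mul z y) <= dd x y.
Proof.
apply/ler_addgt0Pr => eta eta0; have h := dd_ge0 x y.
apply: dd_le; first lra.
case: (@dd_lt x y (dd x y + eta) ltac:(lra)) => [g|[s [hs hP]]]; first by left.
by right; exists s; split => //; apply: P_left.
Qed.

Lemma dd_right x y z :
  (forall n a, V n a -> exists a', V n a' /\ mul a z = mul z a') ->
  dd (mul x z) (mul y z) <= dd x y.
Proof.
move=> comm; apply/ler_addgt0Pr => eta eta0; have h := dd_ge0 x y.
apply: dd_le; first lra.
case: (@dd_lt x y (dd x y + eta) ltac:(lra)) => [g|[s [hs hP]]]; first by left.
by right; exists s; split => //; apply: P_right.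
Qed.

Lemma dd_N x (δ : R) : 0 < δ -> nbhs x (dball dd x δ).
Proof.
move=> δ0; have [n wn] := w_small δ0.
apply: (filterS _ (hopen x (hVe n))) => y [a Va <-].
rewrite /dball /=.
have w0 := @w_gt0 R n.
apply: (@le_lt_trans _ _ ((w n + δ) / 2)); last lra.
apply: dd_le; first lra.
by right; exists [:: n]; split; [rewrite /= addr0; lra|exists a].
Qed.

Lemma dd_R y w0 (eps : R) : dd y w0 < eps -> forall N, nbhs w0 N ->
  exists K, nbhs y K /\ forall z, K z -> exists z', N z' /\ dd z z' < eps.
Proof.
move=> /dd_lt [g|[s [hs hP]]] N hN.
  exists setT; split; first exact: filterT.
  move=> z _; exists w0; split; first exact: nbhs_singleton.
  by have := dd_le1 z w0; lra.
have [f [fy Pf fc]] := P_cont hP.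
exists (f @^-1` N); split; first exact: fc.
move=> z Nz; exists (f z); split => //.
have s0 := @sig_ge0 R s.
apply: (@le_lt_trans _ _ ((sig s + eps) / 2)); last lra.
apply: dd_le; first lra.
by right; exists s; split => //; lra.
Qed.

Lemma dd_ball x U : V 0 `<=` U -> dball dd x 1 `<=` lmul mul x U.
Proof.
move=> V0U y; rewrite /dball /= => /dd_lt [|[s [hs hP]]]; first by rewrite ltxx.
have [u [Vu ->]] := @frink R (size s) s (leqnn _) 0 x y
  ltac:(rewrite /w expr0; lra) hP.
by exists u => //; apply: V0U.
Qed.

Lemma dd_all (U : set S) : V 0 `<=` U ->
  ((forall x y, 0 <= dd x y) /\ (forall x y, dd x y <= 1) /\ (forall x, dd x x = 0) /\
      (forall x y z, dd x z <= dd x y + dd y z) /\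
      (forall x (δ : R), 0 < δ -> nbhs x (dball dd x δ)) /\
      (forall y w0 (eps : R), dd y w0 < eps -> forall N, nbhs w0 N ->
        exists K, nbhs y K /\ forall z, K z -> exists z', N z' /\ dd z z' < eps) /\
      left_subinvariant mul dd /\
      (forall z, (forall n a, V n a -> exists a', V n a' /\ mul a z = mul z a') ->
         forall x y, dd (mul x z) (mul y z) <= dd x y)
    /\ (forall x, dball dd x 1 `<=` lmul mul x U)).
Proof.
move=> V0U.
split; first exact: dd_ge0.
split; first exact: dd_le1.
split; first exact: dd_xx.
split; first exact: dd_tri.
split; first exact: dd_N.
split; first exact: dd_R.
split; first by move=> x y z; apply: dd_left.
split; first by move=> z comm x y; apply: dd_right.
by move=> x; apply: dd_ball.
Qed.

End Chains.


Lemma step_ex (S : topologicalType) (mul : S -> S -> S) (e : S)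
  (hcont : continuous (fun p : S * S => mul p.1 p.2))
  (hunit : forall x, mul x e = x) (W : set S) : nbhs e W ->
  exists V : set S, [/\ nbhs e V,
    (forall a b c, V a -> V b -> V c -> W (mul a (mul b c))) &
    (balanced_point mul e -> forall x, lmul mul x V = rmul mul V x)].
Proof.
move=> hW.
have hee : mul e e = e by apply: hunit.
have h1 : nbhs (mul (e, e).1 (e, e).2) W by rewrite /= hee.
have [[P1 P2] /= [nP1 nP2] sub1] := @hcont (e, e) W h1.
have h2 : nbhs (mul (e, e).1 (e, e).2) (P1 `&` P2) by rewrite /= hee; apply: filterI.
have [[Q1 Q2] /= [nQ1 nQ2] sub2] := @hcont (e, e) _ h2.
set V2 := (P1 `&` P2) `&` (Q1 `&` Q2).
have nV2 : nbhs e V2 by apply: filterI; apply: filterI.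
have tri : forall a b c, V2 a -> V2 b -> V2 c -> W (mul a (mul b c)).
  move=> a b c [[Pa _] _] [_ [Qb _]] [_ [_ Qc]].
  have [_ Pbc] : (P1 `&` P2) (mul b c) by apply: (sub2 (b, c)).
  by apply: (sub1 (a, mul b c)).
have [bal|nbal] := pselect (balanced_point mul e); last first.
  by exists V2; split.
have [V [oV Ve VV2 comm]] := bal V2 nV2.
exists V; split => //.
- by apply: open_nbhs_nbhs; split.
- by move=> a b c Va Vb Vc; apply: tri; apply: VV2.
Qed.

Lemma Vseq_ex (S : topologicalType) (mul : S -> S -> S) (e : S)
  (hcont : continuous (fun p : S * S => mul p.1 p.2))
  (hunit : forall x, mul x e = x) (U : set S) : nbhs e U ->
  exists V : nat -> set S, [/\ (forall n, nbhs e (V n)),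
    (forall n a b c, V n.+1 a -> V n.+1 b -> V n.+1 c -> V n (mul a (mul b c))),
    V 0 `<=` U &
    (balanced_point mul e -> forall n x, lmul mul x (V n) = rmul mul (V n) x)].
Proof.
move=> hU.
have stepf : forall W : set S, {V : set S | nbhs e W -> [/\ nbhs e V,
    (forall a b c, V a -> V b -> V c -> W (mul a (mul b c))) &
    (balanced_point mul e -> forall x, lmul mul x V = rmul mul V x)]}.
  move=> W; apply: cid; have [hW|hW] := pselect (nbhs e W).
    by have [V hV] := step_ex hcont hunit hW; exists V.
  by exists set0.
pose f W := proj1_sig (stepf W).
have fP W := proj2_sig (stepf W).
pose V n := iter n.+1 f U.
have nV : forall n, nbhs e (V n).
  elim => [|n IH]; first by have [] := fP U hU.
  by have [] := fP (V n) IH.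
exists V; split => //.
- by move=> n a b c; have [_ h _] := fP (V n) (nV n); apply: h.
- move=> a Va; have [_ h _] := fP U hU.
  have := h a e e Va (nbhs_singleton (nV 0)) (nbhs_singleton (nV 0)).
  by rewrite !hunit.
- move=> bal; elim => [|n IH] x.
    by have [_ _ h] := fP U hU; apply: h.
  by have [_ _ h] := fP (V n) (nV n); apply: h.
Qed.

Theorem theorem6p1 (R : realType) (S : topologicalType) (mul : S -> S -> S)
  (e : S) (hS : topological_semigroup mul) (he : open_right_unit mul e)
  (U : set S) (hUo : open U) (hUe : U e) :
  exists d : S -> S -> R,
    (premetric d /\ (forall x y : S, 0 <= d x y <= 1)) /\
    [/\ (* (1) *)
        dreg d = dsemireg d /\ (forall x y : S, dreg d x y <= d x y),
        (* (2) *)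
        [/\ left_subinvariant mul d, dist_continuous d,
            quasi_pseudometric d & has_open_balls d],
        (* (3) *)
        [/\ left_subinvariant mul (dreg d), pm_right_continuous (dreg d),
            dist_continuous (dreg d) & quasi_pseudometric (dreg d)],
        (* (4) *)
        (forall x : S, (dball d x 1 `<=` lmul mul x U) /\
                   (dball (dreg d) x 1 `<=` interior (closure (lmul mul x U))))
      & (* (5) *)
        (balanced_point mul e ->
           subinvariant mul d /\ subinvariant mul (dreg d))].
Proof.
have [hassoc hcont] := hS; have [hunit hopen] := he.
have hU : nbhs e U by apply: open_nbhs_nbhs; split.
have [V [hVe hV3 V0U hbal]] := Vseq_ex hcont hunit hU.
have [hd0 [hd1 [hdxx [htri [hN [hR [hleft [hright hball]]]]]]]] :=
  dd_all hassoc hcont hunit hVe hV3 R hopen V0U.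
set d := dd mul V R in hd0 hd1 hdxx htri hN hR hleft hright hball *.
have [g1 [g2 [g3 [g4 [g5 [g6 [g7 [g8 g9]]]]]]]] := generic_all hd0 hdxx hd1 htri hN hR.
have dleft : left_subinvariant mul (dreg d).
  move=> x y z; apply: (g9 x y (mul z x) (mul z y)) => eps eps0 C.
  apply: (closure_map _ _ C); first exact: lmul_cont.
  move=> b /dballA1 xb; apply/dballA1.
  exact: le_lt_trans (hleft x b z) xb.
exists d; split.
  split; first by split.
  by move=> x y; rewrite hd0 hd1.
split.
- split; last exact: g2.
  by apply/funext => x; apply/funext => y; apply: g1.
- by split => //; split.
- by split.
- by move=> x; split; [exact: hball|apply: g8; exact: hball].
move=> bal.
have comm : forall z n a, V n a -> exists a', V n a' /\ mul a z = mul z a'.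
  move=> z n a Va.
  have : rmul mul (V n) z (mul a z) by exists a.
  rewrite -hbal // => -[a' Va' eq]; exists a'; split => //.
have dright : right_subinvariant mul d.
  by move=> x y z; apply: hright; apply: comm.
split; split => //.
move=> x y z; apply: (g9 x y (mul x z) (mul y z)) => eps eps0 C.
apply: (closure_map (f := fun w => mul w z) _ _ C); first exact: rmul_cont.
move=> b /dballA1 xb; apply/dballA1.
exact: le_lt_trans (dright x b z) xb.
Qed.
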